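(* Let $F$ be a recurrent set and let $X\subset F$ be a bifix code of finite $F$-degree $d\ge 2$. Let $I=I(X)$, $K=K(X)$, $G=(IA\cap F)\setminus I$ and $D=(AI\cap F)\setminus I$. Then $X'=K\cup(G\cap D)$ is a bifix code of $F$-degree $d-1$.
   Context: $A$ is a finite alphabet. $F\subset A^*$ is recurrent if it is nonempty, closed under factors, and for all $u,w\in F$ there is $v\in F$ with $uvw\in F$. A bifix code is a set of nonempty words none of which is a proper prefix or proper suffix of another. A parse of $w$ with respect to $X$ is a triple $(v,x,u)$ with $w=vxu$, $v$ having no suffix in $X$, $x\in X^*$, $u$ having no prefix in $X$; $\delta_X(w)$ is the number of parses and the $F$-degree is $d_F(X)=\max_{w\in F}\delta_X(w)$. $I(X)=\{w\in A^*\mid A^+wA^+\cap X\neq\emptyset\}$ is the set of internal factors of $X$, and $K(X)=X\cap I(X)$ is the kernel of $X$. *)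

(* Defs.v *)
From Stdlib Require Import ClassicalEpsilon.
From mathcomp Require Import all_boot.
Set Implicit Arguments. Unset Strict Implicit. Unset Printing Implicit Defensive.

Definition lang (A : finType) := seq A -> Prop.

Definition pb (P : Prop) : bool :=
  if excluded_middle_informative P then true else false.

Section Words.
Variable A : finType.

Definition factorial (F : lang A) : Prop :=
  forall u f v, F (u ++ f ++ v) -> F f.

Definition recurrent (F : lang A) : Prop :=
  (exists w, F w) /\ factorial F /\
  (forall u w, F u -> F w -> exists v, F v /\ F (u ++ v ++ w)).

Definition bifix_code (X : lang A) : Prop :=
  (forall x, X x -> x <> [::]) /\
  (forall x y, X x -> X y -> prefix x y -> x = y) /\
  (forall x y, X x -> X y -> suffix x y -> x = y).

Inductive star (X : lang A) : lang A :=
  | star_nil : star X [::]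
  | star_cons x w : X x -> star X w -> star X (x ++ w).

Definition is_parse (X : lang A) (w v x u : seq A) : Prop :=
  w = v ++ x ++ u /\
  (forall s, suffix s v -> ~ X s) /\
  star X x /\
  (forall p, prefix p u -> ~ X p).

(* delta_X(w): number of parses; a parse is determined by the cut points
   i <= j, with v = w[0,i), x = w[i,j), u = w[j,|w|). *)
Definition delta (X : lang A) (w : seq A) : nat :=
  #|[set ij : 'I_(size w).+1 * 'I_(size w).+1 |
      ((ij.1 : nat) <= ij.2) &&
      pb (is_parse X w (take ij.1 w) (drop ij.1 (take ij.2 w)) (drop ij.2 w))]|.

Definition Fdegree (F X : lang A) (d : nat) : Prop :=
  (exists w, F w /\ delta X w = d) /\ (forall w, F w -> delta X w <= d).

Definition internal (X : lang A) : lang A :=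
  fun w => exists p s, p <> [::] /\ s <> [::] /\ X (p ++ w ++ s).

Definition kernel (X : lang A) : lang A := fun w => X w /\ internal X w.

Definition Gset (F X : lang A) : lang A :=
  fun w => (exists u a, w = rcons u a /\ internal X u) /\ F w /\ ~ internal X w.

Definition Dset (F X : lang A) : lang A :=
  fun w => (exists a u, w = a :: u /\ internal X u) /\ F w /\ ~ internal X w.

Definition Xprime (F X : lang A) : lang A :=
  fun w => kernel X w \/ (Gset F X w /\ Dset F X w).

End Words.

(* Main.v *)
Require Import Defs.
From Stdlib Require Import Classical ClassicalEpsilon.
From mathcomp Require Import all_boot.
Set Implicit Arguments. Unset Strict Implicit. Unset Printing Implicit Defensive.

Lemma pbP (P : Prop) : reflect P (pb P).
Proof. rewrite /pb; case: excluded_middle_informative => h; by constructor. Qed.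

Lemma pbT (P : Prop) : P -> pb P = true.
Proof. by move=> h; apply/pbP. Qed.
Lemma pbF (P : Prop) : ~ P -> pb P = false.
Proof. by move=> h; apply/pbP. Qed.

Lemma card_pair (I J : finType) (P : I * J -> bool) :
  #|[set ij | P ij]| = \sum_(i:I) \sum_(j:J) (P (i,j) : nat).
Proof.
rewrite pair_big /= -sum1_card big_mkcond /=.
by apply: eq_bigr => [[i j]] _; rewrite inE; case: P.
Qed.

Section Codes.
Variable A : finType.
Implicit Types (Y : lang A) (w u v s t : seq A).

Definition nsuf Y w := forall s, suffix s w -> ~ Y s.
Definition npre Y w := forall p, prefix p w -> ~ Y p.

Lemma star_cat Y u v : star Y u -> star Y v -> star Y (u ++ v).
Proof. by elim=> // x w Yx _ IH sv; rewrite -catA; constructor; auto. Qed.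

Lemma star_one Y x : Y x -> star Y x.
Proof. by move=> h; rewrite -(cats0 x); constructor => //; constructor. Qed.

Lemma cat_cmp (x x' a b : seq A) : x ++ a = x' ++ b -> prefix x x' \/ prefix x' x.
Proof.
move=> e; case: (leqP (size x) (size x')) => h.
  left; rewrite prefixE; have := congr1 (take (size x)) e.
  by rewrite (take_size_cat _ (erefl _)) takel_cat // => ex; apply/eqP.
right; rewrite prefixE; have := congr1 (take (size x')) e.
by rewrite [in X in _ = X -> _](take_size_cat _ (erefl _)) takel_cat ?(ltnW h) // => ex; apply/eqP.
Qed.

Variable Y : lang A.
Hypothesis bY : bifix_code Y.

Lemma star_uniq p1 p2 r1 r2 : star Y p1 -> star Y p2 -> p1 ++ r1 = p2 ++ r2 ->
  npre Y r1 -> npre Y r2 -> p1 = p2.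
Proof.
case: bY => ne [pc _].
move=> s1; elim: s1 p2 r1 r2 => [|x w1 Yx s1 IH] p2 r1 r2 s2.
  case: s2 => [|x' w2 Yx' _] /= e n1 n2 //.
  by case: (n1 x') => //; rewrite e -catA prefix_prefix.
case: s2 => [|x' w2 Yx' s2] /= e n1 n2.
  by case: (n2 x) => //; rewrite -e -catA prefix_prefix.
rewrite -!catA in e.
have ex : x = x'.
  by case: (cat_cmp e) => h; [apply: pc | symmetry; apply: pc].
subst x'; move/(congr1 (drop (size x))): e; rewrite !drop_size_cat // => e.
by rewrite (IH _ _ _ s2 e n1 n2).
Qed.

Lemma greedy t : exists k, k <= size t /\ star Y (take k t) /\ npre Y (drop k t).
Proof.
case: bY => ne _.
elim: {t}(size t) {-2}t (leqnn (size t)) => [|n IH] t st.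
  case: t st => // _; exists 0; split=> //; split; first by constructor.
  move=> p; rewrite prefixs0 => /eqP -> /ne; auto.
case: (classic (exists x, Y x /\ prefix x t)) => [[x [Yx /prefixP [t' et]]]|nx].
  have szx : 0 < size x by case: x Yx {et} => // /ne.
  have st' : size t' <= n by move: st; rewrite et size_cat; move: szx; case: (size x) => //= m _; rewrite addSn ltnS; apply: leq_trans; apply: leq_addl.
  have [k [hk [sk nk]]] := IH t' st'.
  exists (size x + k); split; first by rewrite et size_cat leq_add2l.
  rewrite et take_cat drop_cat ltnNge leq_addr /= addKn; split=> //.
  by constructor.
exists 0; split=> //; rewrite take0 drop0; split; first by constructor.
by move=> p pp Yp; apply: nx; exists p.
Qed.

End Codes.
Section Codes2.
Variable A : finType.
Implicit Types (w u v s t : seq A).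
Variable Y : lang A.
Hypothesis bY : bifix_code Y.

Definition Yr : lang A := fun s => Y (rev s).

Lemma bYr : bifix_code Yr.
Proof.
case: bY => ne [pc sc]; split; first by move=> x /ne h e; apply: h; rewrite e.
split=> x y hx hy h.
  by apply: (can_inj revK); apply: sc => //; rewrite suffix_rev.
by apply: (can_inj revK); apply: pc => //; rewrite -prefix_rev !revK.
Qed.

Lemma star_rev p : star Y p -> star Yr (rev p).
Proof.
elim=> [|x w Yx _ IH]; first by constructor.
by rewrite rev_cat; apply: star_cat => //; apply: star_one; rewrite /Yr revK.
Qed.

Lemma star_uniq_r p1 p2 l1 l2 : star Y p1 -> star Y p2 -> l1 ++ p1 = l2 ++ p2 ->
  nsuf Y l1 -> nsuf Y l2 -> p1 = p2.
Proof.
move=> s1 s2 e n1 n2; apply: (can_inj revK).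
apply: (@star_uniq _ _ bYr _ _ (rev l1) (rev l2) (star_rev s1) (star_rev s2)).
- by rewrite -!rev_cat e.
- by move=> p hp; apply: n1; rewrite suffix_revLR.
- by move=> p hp; apply: n2; rewrite suffix_revLR.
Qed.

Lemma greedy_r t : exists k, k <= size t /\ star Y (drop k t) /\ nsuf Y (take k t).
Proof.
case: bY => ne _.
elim: {t}(size t) {-2}t (leqnn (size t)) => [|n IH] t st.
  case: t st => // _; exists 0; split=> //; split; first by constructor.
  move=> p; rewrite suffixs0 => /eqP -> /ne; auto.
case: (classic (exists x, Y x /\ suffix x t)) => [[x [Yx /suffixP [t' et]]]|nx].
  have szx : 0 < size x by case: x Yx {et} => // /ne.
  have st' : size t' <= n.
    move: st; rewrite et size_cat; move: szx; case: (size x) => //= m _.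
    by rewrite addnS ltnS; apply: leq_trans; apply: leq_addr.
  have [k [hk [sk nk]]] := IH t' st'.
  exists k; split; first by rewrite et size_cat (leq_trans hk) // leq_addr.
  rewrite et drop_cat takel_cat //.
  move: hk; rewrite leq_eqVlt => /orP [/eqP ek|lk].
    rewrite {1}ek ltnn {1}ek subnn drop0; split; [exact: star_one | done].
  by rewrite lk; split=> //; apply: star_cat => //; apply: star_one.
exists (size t); rewrite drop_size take_size; split=> //; split; first by constructor.
by move=> p pp Yp; apply: nx; exists p.
Qed.

Definition Pij w (i j : nat) : bool :=
  (i <= j) && pb (is_parse Y w (take i w) (drop i (take j w)) (drop j w)).

Lemma split_ij w i j : i <= j ->
  drop i (take j w) = take (j - i) (drop i w) /\ drop j w = drop (j - i) (drop i w).
Proof.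
move=> h; rewrite take_drop drop_drop subnK //.
Qed.

Lemma parse_ij w i j : i <= j ->
  is_parse Y w (take i w) (drop i (take j w)) (drop j w) <->
  nsuf Y (take i w) /\ star Y (drop i (take j w)) /\ npre Y (drop j w).
Proof.
move=> h; split; first by case=> _ [a [b c]].
case=> a [b c]; split=> //.
have [e1 e2] := split_ij w h; rewrite e1 e2 cat_take_drop cat_take_drop //.
Qed.

Lemma row_count w (i : 'I_(size w).+1) :
  \sum_(j < (size w).+1) (Pij w i j : nat) = pb (nsuf Y (take i w)).
Proof.
have hi : i <= size w by rewrite -ltnS.
case: (pbP (nsuf Y (take i w))) => h; last first.
  apply: big1 => j _; case: (boolP (Pij w i j)) => //.
  by case/andP=> hij /pbP /(parse_ij _ hij) [].
have [k [hk [sk nk]]] := greedy bY (drop i w).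
have hik : i + k < (size w).+1.
  by move: hk; rewrite size_drop ltnS -(leq_add2l i) subnKC.
rewrite (bigD1 (Ordinal hik)) //= big1 ?addn0.
  have hij : i <= i + k by apply: leq_addr.
  rewrite /Pij hij pbT //; apply/(parse_ij _ hij); split=> //.
  by have [-> ->] := split_ij w hij; rewrite addKn.
move=> j /eqP nj; case: (boolP (Pij w i j)) => //.
case/andP=> hij /pbP /(parse_ij _ hij) [_ [s2 n2]].
have [e1 e2] := split_ij w hij; rewrite e1 in s2; rewrite e2 in n2.
have := star_uniq bY sk s2 (r1 := drop k (drop i w)) (r2 := drop (j - i) (drop i w)).
rewrite !cat_take_drop => /(_ erefl nk n2) /(congr1 size).
have hj : j <= size w by rewrite -ltnS.
rewrite size_takel // size_takel; last by rewrite size_drop leq_sub2r.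
move=> es; exfalso; apply: nj; apply: val_inj => /=; rewrite es subnKC //.
Qed.

Lemma col_count w (j : 'I_(size w).+1) :
  \sum_(i < (size w).+1) (Pij w i j : nat) = pb (npre Y (drop j w)).
Proof.
have hj : j <= size w by rewrite -ltnS.
case: (pbP (npre Y (drop j w))) => h; last first.
  apply: big1 => i _; case: (boolP (Pij w i j)) => //.
  by case/andP=> hij /pbP /(parse_ij _ hij) [_ []].
have [k [hk [sk nk]]] := greedy_r (take j w).
have hkj : k <= j by move: hk; rewrite size_takel.
have hk1 : k < (size w).+1 by rewrite ltnS (leq_trans hkj).
rewrite (bigD1 (Ordinal hk1)) //= big1 ?addn0.
  rewrite /Pij hkj pbT //; apply/(parse_ij _ hkj); split=> //.
  by rewrite -(take_takel _ hkj).
move=> i /eqP ni; case: (boolP (Pij w i j)) => //.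
case/andP=> hij /pbP /(parse_ij _ hij) [n2 [s2 _]].
rewrite -(take_takel _ hij) in n2.
have := star_uniq_r sk s2 (l1 := take k (take j w)) (l2 := take i (take j w)).
rewrite !cat_take_drop => /(_ erefl nk n2) /(congr1 size).
rewrite !size_drop size_takel // => es; exfalso; apply: ni; apply: val_inj => /=.
by rewrite -(subKn hij) -es subKn.
Qed.

Lemma delta_E w : delta Y w = \sum_(i < (size w).+1) pb (nsuf Y (take i w)).
Proof.
rewrite /delta card_pair; apply: eq_bigr => i _; rewrite -row_count.
by apply: eq_bigr.
Qed.

Lemma delta_S w : delta Y w = \sum_(j < (size w).+1) pb (npre Y (drop j w)).
Proof.
rewrite /delta card_pair exchange_big; apply: eq_bigr => j _; rewrite -col_count.
by apply: eq_bigr.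
Qed.

Lemma delta_R w a : delta Y (rcons w a) = delta Y w + pb (nsuf Y (rcons w a)).
Proof.
rewrite !delta_E size_rcons big_ord_recr /= take_oversize ?size_rcons //.
congr (_ + _); apply: eq_bigr => i _.
by rewrite -cats1 takel_cat // -ltnS.
Qed.

Lemma delta_L w a : delta Y (a :: w) = delta Y w + pb (npre Y (a :: w)).
Proof.
by rewrite !delta_S /= big_ord_recl /= addnC.
Qed.


End Codes2.

Lemma pb_eq (P Q : Prop) : (P <-> Q) -> pb P = pb Q.
Proof. by move=> [h1 h2]; case: (pbP P) => h; [rewrite pbT; auto | rewrite pbF; auto]. Qed.

Lemma delta_nil (A : finType) (Y : lang A) : bifix_code Y -> delta Y [::] = 1.
Proof.
move=> bY; rewrite (delta_E bY) big_ord_recl big_ord0 addn0 /= pbT //.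
case: bY => ne _; move=> s; rewrite suffixs0 => /eqP -> /ne; auto.
Qed.

Lemma suf_tr (T : eqType) (x y z : seq T) : suffix x y -> suffix y z -> suffix x z.
Proof. by move=> h1 h2; apply: (suffix_trans h1 h2). Qed.

Section Main.
Variables (A : finType) (F X : lang A) (d : nat).
Hypotheses (rF : recurrent F) (XF : forall x, X x -> F x) (bX : bifix_code X)
  (dF : Fdegree F X d) (d2 : 2 <= d).
Implicit Types (w u v s t y z : seq A).

Local Notation I := (internal X).
Local Notation dl := (delta X).

Lemma fact_l u v : F (u ++ v) -> F u.
Proof. by case: rF => _ [fF _] h; apply: (fF [::] u v). Qed.
Lemma fact_r u v : F (u ++ v) -> F v.
Proof. by case: rF => _ [fF _] h; apply: (fF u v [::]); rewrite cats0. Qed.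
Lemma fact_suf s w : suffix s w -> F w -> F s.
Proof. by case/suffixP=> t ->; apply: fact_r. Qed.

Lemma int_fact u w v : I (u ++ w ++ v) -> I w.
Proof.
case=> p [q [hp [hq h]]]; exists (p ++ u), (v ++ q); split.
  by case: p hp h.
split; first by case: q hq h => // c q _ _; case: v.
by rewrite -!catA; move: h; rewrite -!catA.
Qed.
Lemma int_l u v : I (u ++ v) -> I u.
Proof. by move=> h; apply: (int_fact (u:=[::]) (v:=v)). Qed.
Lemma int_r u v : I (u ++ v) -> I v.
Proof. by move=> h; apply: (int_fact (u:=u) (v:=[::])); rewrite cats0. Qed.
Lemma int_suf s w : suffix s w -> I w -> I s.
Proof. by case/suffixP=> t ->; apply: int_r. Qed.

Lemma mono_r u w : dl u <= dl (u ++ w).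
Proof.
elim/last_ind: w => [|w a IH]; first by rewrite cats0.
by rewrite -rcons_cat (delta_R bX) (leq_trans IH) // leq_addr.
Qed.

Lemma mono_l u w : dl w <= dl (u ++ w).
Proof.
elim: u => [|c u IH] //=.
by rewrite (delta_L bX) (leq_trans IH) // leq_addr.
Qed.

Lemma LL1 u w : dl (u ++ w) = dl w -> forall j, j < size u -> ~ npre X (drop j u ++ w).
Proof.
elim: u => [|c u IH] //= e j hj.
move: e; rewrite (delta_L bX) => e.
have m := mono_l u w.
have hb : pb (npre X (c :: u ++ w)) = false.
  by apply/negP => hb; move: e; rewrite hb addn1 => e; move: m; rewrite -e ltnn.
have e' : dl (u ++ w) = dl w.
  by move: e; rewrite hb addn0.
case: j hj => [_|j hj] /=.
  by move/pbP; rewrite hb.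
by apply: IH.
Qed.

Lemma LL2 u w : (forall j, j < size u -> ~ npre X (drop j u ++ w)) -> dl (u ++ w) = dl w.
Proof.
elim: u => [|c u IH] //= h.
rewrite (delta_L bX) pbF ?addn0; last by apply: (h 0).
by apply: IH => j hj; apply: (h j.+1).
Qed.

Lemma deg_le w : F w -> dl w <= d.
Proof. by case: dF => _; apply. Qed.

Lemma K1 s : I s -> dl s < d.
Proof.
case=> p [q [hp [hq Xh]]].
have Fh := XF Xh.
case: p hp Xh Fh => // c p _ Xh Fh.
have np : npre X ((c :: p) ++ s).
  move=> x px Xx; case: bX => _ [pc _].
  have pxx : prefix x ((c :: p) ++ s ++ q).
    by rewrite catA; apply: prefix_trans px (prefix_prefix _ q).
  have e := pc _ _ Xx Xh pxx.
  move: (size_prefix px); rewrite e !size_cat addnA -[X in _ <= X]addn0 leq_add2l.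
  by clear -hq; case: q hq.
have := deg_le (fact_l (u := (c :: p) ++ s) (v := q) _); rewrite -catA => /(_ Fh).
rewrite cat_cons (delta_L bX) pbT // addn1 => h.
by apply: leq_trans h; rewrite ltnS mono_l.
Qed.

Lemma K2 z : F z -> ~ I z -> dl z = d.
Proof.
move=> Fz nIz.
case: dF => [[w0 [Fw0 dw0]] _].
case: rF => _ [_ rec].
have [m [_ F1]] := rec _ _ Fw0 Fz.
have [m' [_ F2]] := rec _ _ F1 Fw0.
set l := w0 ++ m.
have ey : w0 ++ m ++ z = l ++ z by rewrite catA.
rewrite ey in F1 F2.
have h1 : d <= dl (m' ++ w0) by rewrite -dw0 mono_l.
have h2 := deg_le F2.
have h3 := mono_l (l ++ z) (m' ++ w0).
have e : dl ((l ++ z) ++ m' ++ w0) = dl (m' ++ w0).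
  by apply/eqP; rewrite eqn_leq h3 (leq_trans h2 h1).
have H := LL1 e.
have H2 : forall j, j < size l -> ~ npre X (drop j l ++ z).
  move=> j hj hn.
  have hj' : j < size (l ++ z) by rewrite size_cat (leq_trans hj) // leq_addr.
  apply: (H j hj'); rewrite drop_cat hj.
  move=> p /prefixP [s' es] Xp.
  case: (cat_cmp es) => hp; last by apply: (hn p hp Xp).
  case/prefixP: hp => t et.
  case: t et => [|c t] et.
    by apply: (hn p _ Xp); rewrite et cats0 prefix_refl.
  apply: nIz; exists (drop j l), (c :: t); split.
    by move/(congr1 size)=> /eqP; rewrite size_drop subn_eq0 leqNgt hj.
  by split=> //; rewrite catA -et.
have e2 := LL2 H2.
have h4 : d <= dl z.
  by rewrite -e2 -dw0 (leq_trans (mono_r w0 m)) // mono_r.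
by apply/eqP; rewrite eqn_leq h4 deg_le.
Qed.

Lemma K0 : I [::].
Proof.
apply: NNPP => h.
case: rF => [[w Fw] _].
have F0 : F [::] by apply: (fact_l (u := [::]) (v := w)).
have := K2 F0 h; rewrite (delta_nil bX) => e.
by move: d2; rewrite -e.
Qed.

Lemma K3 u a : I u -> F (rcons u a) -> ~ I (rcons u a) -> dl u = d.-1 /\ nsuf X (rcons u a).
Proof.
move=> Iu Fw nIw; have e := K2 Fw nIw; have l := K1 Iu.
move: e; rewrite (delta_R bX); case: (pbP (nsuf X (rcons u a))) => h /= e.
  by split=> //; rewrite -e addn1.
by move: l; rewrite -e addn0 ltnn.
Qed.

Lemma K3' u a : I u -> F (a :: u) -> ~ I (a :: u) -> dl u = d.-1 /\ npre X (a :: u).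
Proof.
move=> Iu Fw nIw; have e := K2 Fw nIw; have l := K1 Iu.
move: e; rewrite (delta_L bX); case: (pbP (npre X (a :: u))) => h /= e.
  by split=> //; rewrite -e addn1.
by move: l; rewrite -e addn0 ltnn.
Qed.


Local Notation X' := (Xprime F X).

Lemma bX' : bifix_code X'.
Proof.
case: bX => ne [pc sc].
split.
  move=> x [[Xx _]|[[[u [a [-> _]]] _] _]]; first by apply: ne.
  by case: u.
split=> x y [[Xx Ix]|[[[u [a [ex Iu]]] [Fx nIx]] Dx]] [[Xy Iy]|[Gy [[b [v [ey Iv]]] [Fy nIy]]]] h.
- by apply: pc.
- have Fy' : F (b :: v) by rewrite -ey.
  have nIy' : ~ I (b :: v) by rewrite -ey.
  have [_ np] := K3' Iv Fy' nIy'.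
  by exfalso; apply: (np x) => //; rewrite -ey.
- by case/prefixP: h Iy => t -> /int_l.
- case/prefixP: h => t et; case: Gy => [[u' [b' [ey' Iu']]] _].
  case/lastP: t et => [|t c] et; first by rewrite et cats0.
  exfalso; apply: nIx; move: et; rewrite ey' -rcons_cat => /rcons_inj [eu _].
  by move: Iu'; rewrite eu; apply: int_l.
- by apply: sc.
- case: Gy => [[u' [b' [ey' Iu']]] _].
  have Fy' : F (rcons u' b') by rewrite -ey'.
  have nIy' : ~ I (rcons u' b') by rewrite -ey'.
  have [_ ns] := K3 Iu' Fy' nIy'.
  by exfalso; apply: (ns x) => //; rewrite -ey'.
- by case/suffixP: h Iy => t -> /int_r.
- case/suffixP: h => t et.
  case: t et => [|c t] et; first by rewrite et.
  exfalso; apply: nIx; move: et; rewrite ey /= => [[_ ev]].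
  by move: Iv; rewrite ev; apply: int_r.
Qed.

Lemma minsuf w : ~ I w -> exists b y', suffix (b :: y') w /\ I y' /\ ~ I (b :: y').
Proof.
elim: w => [|c w IH] h; first by case: (h K0).
case: (classic (I w)) => hw.
  by exists c, w; split=> //; apply: suffix_refl.
have [b [y' [s [i n]]]] := IH hw; exists b, y'; split=> //.
by apply: suf_tr s (suffix_cons _ _).
Qed.

Lemma suf_rcons b y u a : suffix (b :: y) (rcons u a) ->
  exists y'', b :: y = rcons y'' a /\ suffix y'' u.
Proof.
case/suffixP=> t et; exists (belast b y); rewrite lastI in et *.
move: et; rewrite -rcons_cat => /rcons_inj [eu ea]; split.
  by rewrite ea.
by rewrite eu suffix_suffix.
Qed.

Lemma suf_cons_rcons c s u a : suffix (c :: s) u -> suffix (c :: rcons s a) (rcons u a).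
Proof. by case/suffixP=> t ->; rewrite rcons_cat suffix_suffix. Qed.


Lemma hassuf u a : F (rcons u a) -> ~ I (rcons u a) ->
  exists s, suffix s (rcons u a) /\ X' s.
Proof.
move=> Fw nIw.
have mk : forall b y', suffix (b :: y') (rcons u a) -> I y' -> ~ I (b :: y') ->
    (forall y'', b :: y' = rcons y'' a -> suffix y'' u -> I y'') ->
    exists s, suffix s (rcons u a) /\ X' s.
  move=> b y' sb Iy nI hy; exists (b :: y'); split=> //; right.
  have Fb := fact_suf sb Fw.
  have [y'' [e1 e2]] := suf_rcons sb.
  split; split=> //.
    by exists y'', a; split=> //; apply: hy.
  by exists b, y'.
case: (classic (I u)) => Iu.
  have [b [y' [sb [Iy nI]]]] := minsuf nIw.
  apply: (mk b y') => // y'' _ sy; apply: int_suf sy Iu.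
have [c [s [scs [Is nIcs]]]] := minsuf Iu.
have sw := suf_cons_rcons a scs.
case: (classic (I (rcons s a))) => Isa.
  have Fu : F u by apply: (fact_l (v := [:: a])); rewrite cats1.
  have [ds _] := K3' Is (fact_suf scs Fu) nIcs.
  have nI2 : ~ I (c :: rcons s a).
    by move=> h; apply: nIcs; move: h; rewrite -cats1 -cat_cons; apply: int_l.
  have [dsa _] := K3' Isa (fact_suf sw Fw) nI2.
  move: dsa; rewrite (delta_R bX) ds; case: (pbP (nsuf X (rcons s a))) => hn.
    by move/eqP; rewrite -{2}[d.-1]addn0 eqn_add2l.
  move=> _; have [x hx] : exists x, ~ (suffix x (rcons s a) -> ~ X x).
    by apply: not_all_ex_not.
  have [sx Xx] : suffix x (rcons s a) /\ X x by split; apply: NNPP => h; apply: hx.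
  exists x; split.
    by apply: suf_tr sx (suf_tr (suffix_cons _ _) sw).
  by left; split=> //; apply: int_suf sx Isa.
have [b [y' [sb [Iy nI]]]] := minsuf Isa.
apply: (mk b y') => //.
  by apply: suf_tr sb (suf_tr (suffix_cons _ c) sw).
move=> y'' e sy; have [y3 [e3 s3]] := suf_rcons sb.
have e4 : y'' = y3 by move: e3; rewrite e => /rcons_inj [].
by rewrite e4; apply: int_suf s3 Is.
Qed.

Lemma main u : F u -> (I u -> delta X' u = dl u) /\ (~ I u -> delta X' u = d.-1).
Proof.
elim/last_ind: u => [|u a IH] Fw.
  split=> [_|h]; first by rewrite (delta_nil bX') (delta_nil bX).
  by case: (h K0).
have Fu : F u by apply: (fact_l (v := [:: a])); rewrite cats1.
have [IH1 IH2] := IH Fu.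
split=> h.
  have Iu : I u by move: h; rewrite -cats1; apply: int_l.
  rewrite (delta_R bX') (delta_R bX) IH1 //; congr (_ + nat_of_bool _); apply: pb_eq.
  split=> hn s ss hs; apply: (hn s ss).
    by left; split=> //; apply: int_suf ss h.
  case: hs => [[]|[[_ [_ nIs]] _]] //.
  by case: nIs; apply: int_suf ss h.
have [s [ss Xs]] := hassuf Fw h.
rewrite (delta_R bX') pbF ?addn0; last by move=> hn; apply: (hn s ss).
case: (classic (I u)) => Iu; last by apply: IH2.
by rewrite IH1 //; case: (K3 Iu Fw h).
Qed.

End Main.

Theorem mainTheorem4 (A : finType) (F X : lang A) (d : nat) :
  recurrent F ->
  (forall x, X x -> F x) ->
  bifix_code X ->
  Fdegree F X d ->
  2 <= d ->
  bifix_code (Xprime F X) /\ Fdegree F (Xprime F X) d.-1.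
Proof.
move=> rF XF bX dF d2; split; first exact: (bX' rF XF bX dF).
have d0 : 0 < d by apply: leq_trans d2.
split.
  case: (dF) => [[w0 [Fw0 dw0]] _]; exists w0; split=> //.
  have nI : ~ internal X w0.
    by move=> h; have := K1 rF XF bX dF h; rewrite dw0 ltnn.
  by case: (main rF XF bX dF d2 Fw0) => _ ->.
move=> w Fw; case: (main rF XF bX dF d2 Fw) => h1 h2.
case: (classic (internal X w)) => h; last by rewrite h2.
have k := K1 rF XF bX dF h; by rewrite h1 // -ltnS (ltn_predK k).
Qed.
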